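(* Let $\{a_n\}_{n\ge0}$ be a P-recursive sequence whose asymptotic expression is \[ a_n = e^{Q(\rho,n)}\, n^{r}\left(\sum_{s=0}^{M} b_s n^{-s/\rho} + o\!\left(n^{-M/\rho}\right)\right),\qquad Q(\rho,n)=\mu_0 n\log n+\sum_{j=1}^{\rho}\mu_j n^{j/\rho}, \] where $\rho, M$ are positive integers, $\mu_j, r, b_s$ are real numbers, and $b_0\neq 0$. Then there exist real numbers $c_1,\dots,c_M$ such that \[ \lim_{n\to\infty} n^{M/\rho}\left(\frac{a_na_{n+2}}{a_{n+1}^2}-1-\sum_{i=1}^{M}\frac{c_i}{n^{i/\rho}}\right)=0 . \]
   Context: A sequence $\{a_n\}$ is P-recursive (of order $d$) if it satisfies a recurrence $a_n=r_1(n)a_{n-1}+\cdots+r_d(n)a_{n-d}$ with rational functions $r_i(n)$. *)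

(* Defs.v *)
From Stdlib Require Import Reals List.
From Coquelicot Require Import Coquelicot.
Open Scope R_scope.

(* Evaluation of a real polynomial given by its coefficient list
   [c0; c1; ...; ck] (constant term first) at x. *)
Definition poly_eval (l : list R) (x : R) : R :=
  fold_right (fun c acc => c + x * acc) 0 l.

Definition P_recursive_of_order (a : nat -> R) (d : nat) : Prop :=
  exists p q : nat -> list R,
    forall n : nat, (d <= n)%nat ->
      (forall i : nat, (1 <= i <= d)%nat -> poly_eval (q i) (INR n) <> 0) /\
      a n = sum_n_m (fun i => poly_eval (p i) (INR n) / poly_eval (q i) (INR n)
                              * a (n - i)%nat) 1 d.

Definition P_recursive (a : nat -> R) : Prop :=
  exists d : nat, P_recursive_of_order a d.

Definition Qexp (rho : nat) (mu : nat -> R) (n : nat) : R :=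
  mu 0%nat * INR n * ln (INR n)
  + sum_n_m (fun j => mu j * Rpower (INR n) (INR j / INR rho)) 1 rho.

(* Main.v *)
Require Import Defs.
From Stdlib Require Import Reals List Lra Lia FunctionalExtensionality.
From Coquelicot Require Import Coquelicot.
Open Scope R_scope.


Fixpoint psum (c : nat -> R) (K : nat) (y : R) : R :=
  match K with O => 0 | S K' => psum c K' y + c K' * y ^ K' end.

Definition icoef (a : R) (c : nat -> R) (k : nat) : R :=
  match k with O => a | S k' => c k' / INR (S k') end.

Lemma psum_derive a c K (y : R) :
  is_derive (fun z : R => psum (icoef a c) (S K) z) y (psum c K y).
Proof.
  induction K as [|K IH].
  - simpl. auto_derive; auto.
  - apply is_derive_ext with (fun z => psum (icoef a c) (S K) z + icoef a c (S K) * z ^ (S K)).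
    { intros; reflexivity. }
    change (psum c (S K) y) with (psum c K y + c K * y ^ K).
    apply (is_derive_plus (fun z => psum (icoef a c) (S K) z) (fun z : R => icoef a c (S K) * z ^ (S K))); auto.
    unfold icoef. assert (Hm : INR (S K) <> 0) by (apply not_0_INR; lia).
    set (m := INR (S K)) in *. set (ck := c K).
    auto_derive; auto. change (match K with 0%nat => 1 | S _ => INR K + 1 end) with (INR (S K)). fold m. field. auto.
Qed.

Lemma psum_zero c K : psum c K 0 = (match K with O => 0 | _ => c O end).
Proof.
  induction K as [|K IH]; simpl; auto.
  rewrite IH. destruct K; simpl; ring.
Qed.

Definition D := / 2.

Lemma integ f g c K C :
  (forall y, Rabs y <= D -> is_derive f y (g y)) ->
  (forall y, Rabs y <= D -> Rabs (g y - psum c K y) <= C * Rabs y ^ K) ->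
  forall y, Rabs y <= D -> Rabs (f y - psum (icoef (f 0) c) (S K) y) <= C * Rabs y ^ (S K).
Proof.
  intros Hd Hb y Hy.
  set (h := fun z => f z - psum (icoef (f 0) c) (S K) z).
  assert (Hh : forall z, Rabs z <= D -> derivable_pt_lim h z (g z - psum c K z)).
  { intros z Hz. apply is_derive_Reals. unfold h.
    apply (is_derive_minus f (fun z => psum (icoef (f 0) c) (S K) z)); auto.
    apply psum_derive. }
  assert (H0 : h 0 = 0).
  { unfold h. rewrite psum_zero. simpl. ring. }
  change (Rabs (h y) <= C * Rabs y ^ S K).
  destruct (Req_dec y 0) as [Hy0|Hy0].
  { subst. rewrite H0, Rabs_R0. simpl. rewrite Rmult_0_l, Rmult_0_r. lra. }
  assert (Hya : 0 < Rabs y) by (apply Rabs_pos_lt; auto).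
  assert (HC : 0 <= C).
  { specialize (Hb y Hy). pose proof (Rabs_pos (g y - psum c K y)).
    pose proof (pow_lt _ K Hya).
    destruct (Rle_or_lt 0 C); auto.
    assert (C * Rabs y ^ K < 0) by (apply Rmult_neg_pos; auto). lra. }
  assert (key : forall xi, Rabs xi <= Rabs y -> h y = (g xi - psum c K xi) * y ->
             Rabs (h y) <= C * Rabs y ^ S K).
  { intros xi Hxi E. rewrite E, Rabs_mult.
    assert (Rabs xi <= D) by lra.
    specialize (Hb xi H).
    simpl. rewrite (Rmult_comm (Rabs y)), <- Rmult_assoc.
    apply Rmult_le_compat_r. apply Rabs_pos.
    eapply Rle_trans; [exact Hb|].
    apply Rmult_le_compat_l; auto. apply pow_incr. split; auto. apply Rabs_pos. }
  destruct (Rlt_or_le 0 y) as [Hp|Hn].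
  - destruct (MVT_cor2 h (fun z => g z - psum c K z) 0 y Hp) as [xi [E Hxi]].
    { intros z Hz. apply Hh. rewrite Rabs_right by lra. rewrite Rabs_right in Hy by lra. lra. }
    apply (key xi).
    + rewrite !Rabs_right by lra. lra.
    + rewrite H0 in E. lra.
  - assert (Hn' : y < 0) by lra.
    destruct (MVT_cor2 h (fun z => g z - psum c K z) y 0 Hn') as [xi [E Hxi]].
    { intros z Hz. apply Hh. rewrite Rabs_left1 by lra. rewrite Rabs_left in Hy by lra. lra. }
    apply (key xi).
    + rewrite (Rabs_left y) by lra. rewrite Rabs_left by lra. lra.
    + rewrite H0 in E. lra.
Qed.

Definition Xc (f : R -> R) (K : nat) : Prop :=
  exists c C, forall y, Rabs y <= D -> Rabs (f y - psum c K y) <= C * Rabs y ^ K.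

Lemma Xc_integ f g K :
  (forall y, Rabs y <= D -> is_derive f y (g y)) -> Xc g K -> Xc f (S K).
Proof.
  intros Hd [c [C Hb]]. exists (icoef (f 0) c), C. apply integ with g; auto.
Qed.

Lemma psum_scal a c K y : psum (fun k => a * c k) K y = a * psum c K y.
Proof. induction K; simpl; [ring|rewrite IHK; ring]. Qed.

Lemma Xc_scal f a K : Xc f K -> Xc (fun y => a * f y) K.
Proof.
  intros [c [C Hb]]. exists (fun k => a * c k), (Rabs a * C).
  intros y Hy. rewrite psum_scal.
  replace (a * f y - a * psum c K y) with (a * (f y - psum c K y)) by ring.
  rewrite Rabs_mult, Rmult_assoc. apply Rmult_le_compat_l; auto. apply Rabs_pos.
Qed.

Lemma Xc_bounded f B : (forall y, Rabs y <= D -> Rabs (f y) <= B) -> Xc f 0.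
Proof.
  intros H. exists (fun _ => 0), B. intros y Hy. simpl. rewrite Rminus_0_r, Rmult_1_r. auto.
Qed.

Lemma Xc_ext f g K : (forall y, Rabs y <= D -> f y = g y) -> Xc f K -> Xc g K.
Proof.
  intros H [c [C Hb]]. exists c, C. intros y Hy. rewrite <- H; auto.
Qed.

Lemma D_bounds y : Rabs y <= D -> -/2 <= y <= /2.
Proof. unfold D. intros H. apply Rabs_le_between. auto. Qed.

Lemma Xc_exp K : Xc exp K.
Proof.
  induction K.
  - apply Xc_bounded with (exp (/2)). intros y Hy.
    apply D_bounds in Hy. rewrite Rabs_right by (left; apply exp_pos).
    destruct (Req_dec y (/2)). subst; lra. left; apply exp_increasing; lra.
  - apply Xc_integ with exp; auto. intros y _. auto_derive; auto. ring.
Qed.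

Definition pw (a y : R) : R := exp (a * ln (1 + y)).

Lemma pw_derive a y : Rabs y <= D -> is_derive (pw a) y (a * pw (a - 1) y).
Proof.
  intros Hy. apply D_bounds in Hy. unfold pw. auto_derive.
  - lra.
  - replace ((a - 1) * ln (1 + y)) with (a * ln (1+y) + - ln (1 + y)) by ring.
    rewrite exp_plus, exp_Ropp, exp_ln by lra. field. lra.
Qed.

Lemma ln_bound y : Rabs y <= D -> Rabs (ln (1 + y)) <= ln 2.
Proof.
  intros Hy. apply D_bounds in Hy.
  assert (ln 2 > 0) by (rewrite <- ln_1; apply ln_increasing; lra).
  apply Rabs_le. split.
  - replace (- ln 2) with (ln (/2)) by (rewrite ln_Rinv; lra).
    destruct (Req_dec y (-/2)). subst. replace (1 + - / 2) with (/2) by lra. lra.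
    left. apply ln_increasing; lra.
  - destruct (Req_dec y 1). lra. left. apply ln_increasing; lra.
Qed.

Lemma Xc_pw K : forall a, Xc (pw a) K.
Proof.
  induction K; intros a.
  - apply Xc_bounded with (exp (Rabs a * ln 2)). intros y Hy.
    unfold pw. rewrite Rabs_right by (left; apply exp_pos).
    assert (a * ln (1 + y) <= Rabs a * ln 2).
    { eapply Rle_trans. apply Rle_abs. rewrite Rabs_mult.
      apply Rmult_le_compat_l. apply Rabs_pos. apply ln_bound; auto. }
    destruct H. left; apply exp_increasing; auto. rewrite H; lra.
  - apply Xc_integ with (fun y => a * pw (a - 1) y).
    + intros; apply pw_derive; auto.
    + apply Xc_scal. apply IHK.
Qed.


Definition ev (P : nat -> Prop) := exists N, forall n, (N <= n)%nat -> P n.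

Lemma ev_and P Q : ev P -> ev Q -> ev (fun n => P n /\ Q n).
Proof.
  intros [N1 H1] [N2 H2]. exists (max N1 N2). intros n Hn. split; [apply H1|apply H2]; lia.
Qed.

Lemma ev_mono (P Q : nat -> Prop) : ev P -> (forall n, P n -> Q n) -> ev Q.
Proof. intros [N H] HQ. exists N. auto. Qed.

Lemma ev_ge N : ev (fun n => (N <= n)%nat).
Proof. exists N. auto. Qed.

Definition u rho n := Rpower (INR n) (/ INR rho).
Definition t rho n := / u rho n.
Definition x n := / INR n.

Lemma INR_pos n : (1 <= n)%nat -> 0 < INR n.
Proof. intros; apply lt_0_INR; lia. Qed.

Lemma u_pos rho n : 0 < u rho n.
Proof. unfold u, Rpower. apply exp_pos. Qed.

Lemma u_ge1 rho n : (0 < rho)%nat -> (1 <= n)%nat -> 1 <= u rho n.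
Proof.
  intros Hr Hn. unfold u, Rpower. rewrite <- exp_0.
  assert (0 <= ln (INR n)).
  { rewrite <- ln_1. destruct (Req_dec (INR n) 1) as [E|E]. rewrite E; lra.
    left. apply ln_increasing. lra. apply (le_INR 1) in Hn. simpl in Hn. lra. }
  assert (0 < / INR rho) by (apply Rinv_0_lt_compat, INR_pos; lia).
  destruct (Req_dec (/ INR rho * ln (INR n)) 0) as [E|E]. rewrite E; lra.
  left. apply exp_increasing. assert (0 <= / INR rho * ln (INR n)) by (apply Rmult_le_pos; lra). lra.
Qed.

Lemma u_pow rho n : (0 < rho)%nat -> (1 <= n)%nat -> u rho n ^ rho = INR n.
Proof.
  intros Hr Hn. rewrite <- Rpower_pow by apply u_pos. unfold u. rewrite Rpower_mult.
  rewrite Rinv_l by (apply not_0_INR; lia). apply Rpower_1, INR_pos; auto.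
Qed.

Lemma t_pos rho n : 0 < t rho n.
Proof. unfold t. apply Rinv_0_lt_compat, u_pos. Qed.

Lemma t_le1 rho n : (0 < rho)%nat -> (1 <= n)%nat -> t rho n <= 1.
Proof.
  intros. unfold t. pose proof (u_ge1 rho n H H0). rewrite <- Rinv_1.
  apply Rinv_le_contravar; lra.
Qed.

Lemma t_pow rho n : (0 < rho)%nat -> (1 <= n)%nat -> t rho n ^ rho = x n.
Proof. intros. unfold t, x. rewrite pow_inv, u_pow; auto. Qed.

Lemma ut rho n : u rho n * t rho n = 1.
Proof. unfold t. apply Rinv_r. pose proof (u_pos rho n); lra. Qed.

Lemma Rpower_frac rho n i : (0 < rho)%nat -> (1 <= n)%nat ->
  Rpower (INR n) (INR i / INR rho) = u rho n ^ i.
Proof.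
  intros. unfold u. rewrite <- Rpower_pow by (unfold Rpower; apply exp_pos).
  rewrite Rpower_mult. f_equal. unfold Rdiv. ring.
Qed.

Lemma Rpower_nfrac rho n i : (0 < rho)%nat -> (1 <= n)%nat ->
  Rpower (INR n) (- (INR i / INR rho)) = t rho n ^ i.
Proof.
  intros. rewrite Rpower_Ropp, Rpower_frac by auto. unfold t. rewrite pow_inv. auto.
Qed.

Lemma t_small rho : (0 < rho)%nat -> forall eps, 0 < eps -> ev (fun n => t rho n <= eps).
Proof.
  intros Hr eps He. destruct (INR_unbounded (/ eps ^ rho)) as [N HN].
  exists (S N). intros n Hn.
  destruct (Rle_or_lt (t rho n) eps) as [H|H]; auto. exfalso.
  assert (eps ^ rho <= t rho n ^ rho) by (apply pow_incr; lra).
  rewrite t_pow in H0 by (auto; lia). unfold x in H0.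
  assert (0 < eps ^ rho) by (apply pow_lt; auto).
  assert (INR N < INR n) by (apply lt_INR; lia).
  assert (0 < INR n) by (apply INR_pos; lia).
  apply Rinv_le_contravar in H0; auto. rewrite Rinv_inv in H0. lra.
Qed.

Lemma t_mono rho n m : (0 < rho)%nat -> (1 <= n)%nat -> (n <= m)%nat -> t rho m <= t rho n.
Proof.
  intros. unfold t. apply Rinv_le_contravar. apply u_pos.
  unfold u. apply Rle_Rpower_l.
  left; apply Rinv_0_lt_compat, INR_pos; lia.
  split. apply INR_pos; auto. apply le_INR; auto.
Qed.

Lemma tpow_le rho n a b : (0 < rho)%nat -> (1 <= n)%nat -> (a <= b)%nat ->
  t rho n ^ b <= t rho n ^ a.
Proof.
  intros Hr Hn Hab. pose proof (t_pos rho n). pose proof (t_le1 rho n Hr Hn).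
  replace b with (a + (b - a))%nat by lia. rewrite pow_add.
  rewrite <- (Rmult_1_r (t rho n ^ a)) at 2.
  apply Rmult_le_compat_l. apply pow_le; lra.
  clear Hab. induction (b - a)%nat; simpl; [lra|].
  rewrite <- (Rmult_1_r 1). apply Rmult_le_compat; try lra. apply pow_le; lra.
Qed.


Definition small rho M (v : nat -> R) :=
  forall eps, 0 < eps -> ev (fun n => Rabs (v n) <= eps * t rho n ^ M).
Definition bigO rho k (v : nat -> R) :=
  exists C, ev (fun n => Rabs (v n) <= C * t rho n ^ k).
Definition E rho M (v : nat -> R) :=
  exists c, small rho M (fun n => v n - psum c (S M) (t rho n)).


Lemma small_ext rho M v w : ev (fun n => v n = w n) -> small rho M v -> small rho M w.
Proof.
  intros He Hs eps Heps. eapply ev_mono. apply ev_and. apply He. apply (Hs eps Heps).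
  intros n [E1 E2]. rewrite <- E1; auto.
Qed.

Lemma E_ext rho M v w : ev (fun n => v n = w n) -> E rho M v -> E rho M w.
Proof.
  intros He [c Hc]. exists c. eapply small_ext; [|exact Hc].
  eapply ev_mono. apply He. intros n E1. simpl. rewrite E1; auto.
Qed.

Lemma small_add rho M v w : small rho M v -> small rho M w -> small rho M (fun n => v n + w n).
Proof.
  intros Hv Hw eps He.
  eapply ev_mono. apply ev_and. apply (Hv (eps/2)). lra. apply (Hw (eps/2)). lra.
  intros n [H1 H2]. eapply Rle_trans. apply Rabs_triang. lra.
Qed.

Lemma bigO_bounded_mul_small rho M v w :
  bigO rho 0 w -> small rho M v -> small rho M (fun n => w n * v n).
Proof.
  intros [B HB] Hv eps He.
  assert (Hp : 0 < Rabs B + 1) by (pose proof (Rabs_pos B); lra).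
  eapply ev_mono. apply ev_and. apply HB. apply (Hv (eps / (Rabs B + 1))).
  apply Rdiv_lt_0_compat; auto.
  intros n [H1 H2]. simpl in H1. rewrite Rmult_1_r in H1. rewrite Rabs_mult.
  apply Rle_trans with ((Rabs B + 1) * (eps / (Rabs B + 1) * t rho n ^ M)).
  apply Rmult_le_compat; try apply Rabs_pos. pose proof (Rle_abs B); lra. auto.
  right. field. lra.
Qed.

Lemma bigO_const rho a : bigO rho 0 (fun _ => a).
Proof. exists (Rabs a). exists O. intros. simpl. lra. Qed.

Lemma small_scal rho M a v : small rho M v -> small rho M (fun n => a * v n).
Proof. intros. apply bigO_bounded_mul_small; auto. apply bigO_const. Qed.

Lemma small_of_bigO rho M v : (0 < rho)%nat -> bigO rho (S M) v -> small rho M v.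
Proof.
  intros Hr [C HC] eps He.
  assert (Hp : 0 < Rabs C + 1) by (pose proof (Rabs_pos C); lra).
  eapply ev_mono. apply ev_and. apply HC. apply (t_small rho Hr (eps / (Rabs C + 1))).
  apply Rdiv_lt_0_compat; auto.
  intros n [H1 H2]. simpl in H1. eapply Rle_trans. apply H1.
  pose proof (t_pos rho n). pose proof (pow_lt _ M H).
  rewrite <- Rmult_assoc. apply Rmult_le_compat_r. lra.
  apply Rle_trans with ((Rabs C + 1) * t rho n).
  apply Rmult_le_compat_r; [lra| pose proof (Rle_abs C); lra].
  apply Rle_trans with ((Rabs C + 1) * (eps / (Rabs C + 1))).
  apply Rmult_le_compat_l; lra. right; field; lra.
Qed.

Lemma bigO_mono rho k k' v : (0 < rho)%nat -> (k <= k')%nat -> bigO rho k' v -> bigO rho k v.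
Proof.
  intros Hr Hk [C HC]. exists (Rabs C). eapply ev_mono. apply ev_and. apply HC. apply (ev_ge 1).
  intros n [H1 H2]. eapply Rle_trans. apply H1. pose proof (t_pos rho n).
  apply Rle_trans with (Rabs C * t rho n ^ k').
  apply Rmult_le_compat_r. apply pow_le; lra. apply Rle_abs.
  apply Rmult_le_compat_l. apply Rabs_pos. apply tpow_le; auto.
Qed.

Lemma psum_zeroc K y : psum (fun _ => 0) K y = 0.
Proof. induction K; simpl; auto. rewrite IHK; ring. Qed.

Lemma E_small rho M v : small rho M v -> E rho M v.
Proof.
  intros H. exists (fun _ => 0). eapply small_ext; [|exact H].
  exists O. intros. rewrite psum_zeroc. ring.
Qed.

Lemma psum_add c d K y : psum (fun k => c k + d k) K y = psum c K y + psum d K y.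
Proof. induction K; simpl; [ring|rewrite IHK; ring]. Qed.

Lemma E_add rho M v w : E rho M v -> E rho M w -> E rho M (fun n => v n + w n).
Proof.
  intros [c Hc] [d Hd]. exists (fun k => c k + d k).
  eapply small_ext; [|apply (small_add _ _ _ _ Hc Hd)].
  exists O. intros. rewrite psum_add. ring.
Qed.

Lemma E_scal rho M a v : E rho M v -> E rho M (fun n => a * v n).
Proof.
  intros [c Hc]. exists (fun k => a * c k).
  eapply small_ext; [|apply (small_scal _ _ a _ Hc)].
  exists O. intros. rewrite psum_scal. ring.
Qed.

Lemma E_zero rho M : E rho M (fun _ => 0).
Proof. apply E_small. intros eps He. exists O. intros. rewrite Rabs_R0.
  apply Rmult_le_pos. lra. apply pow_le. left; apply t_pos. Qed.

Definition onec (k : nat) : R := match k with O => 1 | _ => 0 end.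

Lemma psum_onec K y : psum onec (S K) y = 1.
Proof. induction K. simpl. ring. simpl psum in *. rewrite IHK. simpl. ring. Qed.

Lemma E_one rho M : E rho M (fun _ => 1).
Proof.
  exists onec. apply (small_ext rho M (fun _ => 0)). exists O. intros. rewrite psum_onec. ring.
  intros eps He. exists O. intros. rewrite Rabs_R0.
  apply Rmult_le_pos. lra. apply pow_le. left; apply t_pos.
Qed.

Lemma E_const rho M a : E rho M (fun _ => a).
Proof.
  eapply E_ext; [|apply (E_scal rho M a _ (E_one rho M))]. exists O. intros. ring.
Qed.

Definition shiftc (c : nat -> R) (k : nat) : R := match k with O => 0 | S k' => c k' end.

Lemma psum_shift c K y : psum (shiftc c) (S K) y = y * psum c K y.
Proof.
  induction K. simpl. ring.
  change (psum (shiftc c) (S (S K)) y) with (psum (shiftc c) (S K) y + c K * y ^ (S K)).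
  rewrite IHK. simpl. ring.
Qed.

Lemma E_tmul rho M v : (0 < rho)%nat -> E rho M v -> E rho M (fun n => t rho n * v n).
Proof.
  intros Hr [c Hc]. exists (shiftc c).
  apply (small_ext rho M (fun n => t rho n * (v n - psum c (S M) (t rho n)) + c M * t rho n ^ (S M))).
  { exists O. intros n _.
    assert (psum (shiftc c) (S (S M)) (t rho n) = psum (shiftc c) (S M) (t rho n) + c M * t rho n ^ (S M)) by reflexivity.
    rewrite psum_shift in H. rewrite Rmult_minus_distr_l, H. ring. }
  apply small_add.
  - apply bigO_bounded_mul_small; auto. exists 1. eapply ev_mono. apply (ev_ge 1).
    intros n Hn. simpl. rewrite Rabs_right. rewrite Rmult_1_r. apply t_le1; auto.
    left; apply t_pos.
  - apply small_of_bigO; auto. exists (Rabs (c M)). exists O. intros. rewrite Rabs_mult.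
    rewrite (Rabs_right (_ ^ _)). lra. left. apply pow_lt, t_pos.
Qed.

Lemma E_tpow_mul rho M v m : (0 < rho)%nat -> E rho M v -> E rho M (fun n => t rho n ^ m * v n).
Proof.
  intros Hr Hv. induction m.
  - eapply E_ext; [|exact Hv]. exists O. intros. simpl. ring.
  - eapply E_ext; [|apply (E_tmul _ _ _ Hr IHm)]. exists O. intros. simpl. ring.
Qed.

Lemma E_tpow rho M m : (0 < rho)%nat -> E rho M (fun n => t rho n ^ m).
Proof.
  intros Hr. eapply E_ext; [|apply (E_tpow_mul rho M _ m Hr (E_one rho M))].
  exists O. intros. ring.
Qed.

Lemma pow_le1 y K : 0 <= y <= 1 -> y ^ K <= 1.
Proof.
  intros Hy. induction K; simpl. lra.
  rewrite <- (Rmult_1_r 1). apply Rmult_le_compat; try lra. apply pow_le; lra.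
Qed.

Lemma psum_abs c K y : 0 <= y <= 1 -> Rabs (psum c K y) <= psum (fun k => Rabs (c k)) K 1.
Proof.
  intros Hy. induction K; simpl. rewrite Rabs_R0; lra.
  eapply Rle_trans. apply Rabs_triang. apply Rplus_le_compat; auto.
  rewrite Rabs_mult, pow1, Rmult_1_r. rewrite <- (Rmult_1_r (Rabs (c K))) at 2.
  apply Rmult_le_compat_l. apply Rabs_pos.
  rewrite Rabs_right. apply pow_le1; lra. apply Rle_ge, pow_le; lra.
Qed.


Lemma E_bounded rho M v : (0 < rho)%nat -> E rho M v -> bigO rho 0 v.
Proof.
  intros Hr [c Hc]. exists (1 + psum (fun k => Rabs (c k)) (S M) 1).
  eapply ev_mono. apply ev_and. apply (Hc 1 Rlt_0_1). apply (ev_ge 1).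
  intros n [H1 H2]. simpl. rewrite Rmult_1_r.
  pose proof (t_pos rho n). pose proof (t_le1 rho n Hr H2).
  replace (v n) with ((v n - psum c (S M) (t rho n)) + psum c (S M) (t rho n)) by ring.
  eapply Rle_trans. apply Rabs_triang. apply Rplus_le_compat.
  eapply Rle_trans. apply H1. rewrite Rmult_1_l. apply pow_le1; lra.
  apply psum_abs; lra.
Qed.

Lemma bigO_add rho k v w : bigO rho k v -> bigO rho k w -> bigO rho k (fun n => v n + w n).
Proof.
  intros [C1 H1] [C2 H2]. exists (C1 + C2). eapply ev_mono. apply ev_and. apply H1. apply H2.
  intros n [A B]. eapply Rle_trans. apply Rabs_triang. lra.
Qed.

Lemma bigO_mul rho k v w : bigO rho 0 w -> bigO rho k v -> bigO rho k (fun n => w n * v n).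
Proof.
  intros [B HB] [C HC]. exists (Rabs B * Rabs C). eapply ev_mono. apply ev_and. apply HB. apply HC.
  intros n [A1 A2]. simpl in A1. rewrite Rmult_1_r in A1. rewrite Rabs_mult.
  pose proof (pow_lt _ k (t_pos rho n)).
  rewrite Rmult_assoc. apply Rmult_le_compat; try apply Rabs_pos.
  pose proof (Rle_abs B); lra.
  eapply Rle_trans. apply A2. apply Rmult_le_compat_r. lra. apply Rle_abs.
Qed.

Lemma bigO_scal rho k a v : bigO rho k v -> bigO rho k (fun n => a * v n).
Proof. intros. apply bigO_mul; auto. apply bigO_const. Qed.

Lemma bigO_ext rho k v w : ev (fun n => v n = w n) -> bigO rho k v -> bigO rho k w.
Proof.
  intros He [C HC]. exists C. eapply ev_mono. apply ev_and. apply He. apply HC.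
  intros n [A B]. rewrite <- A; auto.
Qed.

Lemma bigO_of_small rho M v : small rho M v -> bigO rho M v.
Proof. intros H. exists 1. apply H. lra. Qed.

Lemma small_zero rho M : small rho M (fun _ => 0).
Proof. intros eps He. exists O. intros. rewrite Rabs_R0.
  apply Rmult_le_pos. lra. apply pow_le. left; apply t_pos. Qed.

Lemma E_mul_psum rho M w K d : (0 < rho)%nat -> E rho M w ->
  E rho M (fun n => w n * psum d K (t rho n)).
Proof.
  intros Hr Hw. induction K.
  - eapply E_ext; [|apply E_zero]. exists O. intros; simpl; ring.
  - eapply E_ext; [|apply (E_add _ _ _ _ IHK (E_scal _ _ (d K) _ (E_tpow_mul rho M w K Hr Hw)))].
    exists O. intros; simpl; ring.
Qed.

Lemma E_mul rho M v w : (0 < rho)%nat -> E rho M v -> E rho M w -> E rho M (fun n => v n * w n).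
Proof.
  intros Hr Hv Hw. pose proof (E_bounded _ _ _ Hr Hv) as Bv.
  destruct Hw as [d Hd].
  eapply E_ext; [|apply (E_add _ _ _ _ (E_mul_psum rho M v (S M) d Hr Hv)
                   (E_small _ _ _ (bigO_bounded_mul_small _ _ _ _ Bv Hd)))].
  exists O. intros; simpl; ring.
Qed.

Lemma sum_closed (P : (nat -> R) -> Prop) :
  P (fun _ => 0) -> (forall f g, P f -> P g -> P (fun n => f n + g n)) ->
  forall (F : nat -> nat -> R) a b, (forall i, (a <= i <= b)%nat -> P (F i)) ->
  P (fun n => sum_n_m (fun i => F i n) a b).
Proof.
  intros P0 Padd F a b. induction b; intros HF.
  - destruct a.
    + replace (fun n => sum_n_m (fun i => F i n) 0 0) with (F 0%nat).
      apply HF; lia. apply functional_extensionality; intros n. rewrite sum_n_n. auto.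
    + replace (fun n => sum_n_m (fun i => F i n) (S a) 0) with (fun _ : nat => 0). auto.
      apply functional_extensionality; intros n. rewrite sum_n_m_zero by lia. auto.
  - destruct (Nat.lt_trichotomy a (S b)) as [H|[H|H]].
    + replace (fun n => sum_n_m (fun i => F i n) a (S b)) with
        (fun n => sum_n_m (fun i => F i n) a b + F (S b) n).
      apply Padd. apply IHb. intros; apply HF; lia. apply HF; lia.
      apply functional_extensionality; intros n. rewrite sum_n_Sm by lia. auto.
    + subst. replace (fun n => sum_n_m (fun i => F i n) (S b) (S b)) with (F (S b)).
      apply HF; lia. apply functional_extensionality; intros n. rewrite sum_n_n. auto.
    + replace (fun n => sum_n_m (fun i => F i n) a (S b)) with (fun _ : nat => 0). auto.
      apply functional_extensionality; intros n. rewrite sum_n_m_zero by lia. auto.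
Qed.

Lemma E_sum rho M (F : nat -> nat -> R) a b : (forall i, (a <= i <= b)%nat -> E rho M (F i)) ->
  E rho M (fun n => sum_n_m (fun i => F i n) a b).
Proof. apply sum_closed. apply E_zero. apply E_add. Qed.

Lemma bigO_sum rho k (F : nat -> nat -> R) a b : (forall i, (a <= i <= b)%nat -> bigO rho k (F i)) ->
  bigO rho k (fun n => sum_n_m (fun i => F i n) a b).
Proof.
  apply sum_closed. exists 0. exists O. intros. rewrite Rabs_R0. lra. apply bigO_add.
Qed.

Lemma E_pow rho M w m : (0 < rho)%nat -> E rho M w -> E rho M (fun n => w n ^ m).
Proof.
  intros Hr Hw. induction m.
  - apply E_one.
  - apply (E_mul _ _ _ _ Hr Hw IHm).
Qed.

Lemma E_psum rho M w c K : (0 < rho)%nat -> E rho M w -> E rho M (fun n => psum c K (w n)).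
Proof.
  intros Hr Hw. induction K.
  - apply E_zero.
  - apply (E_add _ _ _ _ IHK (E_scal _ _ (c K) _ (E_pow _ _ _ K Hr Hw))).
Qed.

Lemma ev_small_w rho w : (0 < rho)%nat -> bigO rho 1 w ->
  exists Cw, 0 <= Cw /\ ev (fun n => Rabs (w n) <= Cw * t rho n /\ Rabs (w n) <= D).
Proof.
  intros Hr [Cw HC]. exists (Rabs Cw). split. apply Rabs_pos.
  assert (Hp : 0 < Rabs Cw + 1) by (pose proof (Rabs_pos Cw); lra).
  eapply ev_mono. apply ev_and. apply HC. apply (t_small rho Hr (D / (Rabs Cw + 1))).
  apply Rdiv_lt_0_compat; auto. unfold D; lra.
  intros n [H1 H2]. simpl in H1. rewrite Rmult_1_r in H1. pose proof (t_pos rho n).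
  assert (Rabs (w n) <= Rabs Cw * t rho n).
  { eapply Rle_trans. apply H1. apply Rmult_le_compat_r. lra. apply Rle_abs. }
  split; auto. eapply Rle_trans. apply H0.
  apply Rle_trans with ((Rabs Cw + 1) * t rho n). apply Rmult_le_compat_r; lra.
  apply Rle_trans with ((Rabs Cw + 1) * (D / (Rabs Cw + 1))).
  apply Rmult_le_compat_l; lra. right; field; lra.
Qed.

Lemma E_comp rho M F w : (0 < rho)%nat -> Xc F (S M) -> E rho M w -> bigO rho 1 w ->
  E rho M (fun n => F (w n)).
Proof.
  intros Hr [c [C HF]] Hw Bw.
  destruct (ev_small_w rho w Hr Bw) as [Cw [HCw Hev]].
  assert (Hs : small rho M (fun n => F (w n) - psum c (S M) (w n))).
  2:{ eapply E_ext; [|apply (E_add _ _ _ _ (E_psum rho M w c (S M) Hr Hw)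
     (E_small _ _ _ Hs))].
  exists O; intros; ring. }
  apply small_of_bigO; auto. exists (Rabs C * Cw ^ (S M)).
  eapply ev_mono. apply Hev. intros n [H1 H2].
  eapply Rle_trans. apply HF; auto.
  pose proof (t_pos rho n).
  apply Rle_trans with (Rabs C * Rabs (w n) ^ S M).
  apply Rmult_le_compat_r. apply pow_le, Rabs_pos. apply Rle_abs.
  rewrite Rmult_assoc. apply Rmult_le_compat_l. apply Rabs_pos.
  rewrite <- Rpow_mult_distr. apply pow_incr. split. apply Rabs_pos. auto.
Qed.

Lemma bigO_comp rho F w m C : (0 < rho)%nat ->
  (forall y, Rabs y <= D -> Rabs (F y) <= C * Rabs y ^ m) -> bigO rho 1 w ->
  bigO rho m (fun n => F (w n)).
Proof.
  intros Hr HF Bw.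
  destruct (ev_small_w rho w Hr Bw) as [Cw [HCw Hev]].
  exists (Rabs C * Cw ^ m).
  eapply ev_mono. apply Hev. intros n [H1 H2].
  eapply Rle_trans. apply HF; auto.
  apply Rle_trans with (Rabs C * Rabs (w n) ^ m).
  apply Rmult_le_compat_r. apply pow_le, Rabs_pos. apply Rle_abs.
  rewrite Rmult_assoc. apply Rmult_le_compat_l. apply Rabs_pos.
  rewrite <- Rpow_mult_distr. apply pow_incr. split. apply Rabs_pos. auto.
Qed.


Lemma ut_pow rho n j a : (j <= a)%nat ->
  u rho n ^ j * t rho n ^ a = t rho n ^ (a - j).
Proof.
  intros H. replace a with (j + (a - j))%nat at 1 by lia. rewrite pow_add, <- Rmult_assoc.
  rewrite <- Rpow_mult_distr, ut, pow1. ring.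
Qed.

Lemma x_small rho k : (0 < rho)%nat -> ev (fun n => Rabs (k * x n) <= D).
Proof.
  intros Hr. assert (Hp : 0 < Rabs k + 1) by (pose proof (Rabs_pos k); lra).
  eapply ev_mono. apply ev_and. apply (t_small rho Hr (D / (Rabs k + 1))).
  apply Rdiv_lt_0_compat; auto. unfold D; lra. apply (ev_ge 1).
  intros n [H1 H2]. rewrite <- (t_pow rho n) by auto.
  pose proof (t_pos rho n). pose proof (t_le1 rho n Hr H2).
  rewrite Rabs_mult. rewrite (Rabs_right (_ ^ _)) by (left; apply pow_lt; lra).
  apply Rle_trans with ((Rabs k + 1) * t rho n).
  apply Rmult_le_compat. apply Rabs_pos. apply pow_le; lra. lra.
  replace (t rho n) with (t rho n ^ 1) at 2 by ring. apply tpow_le; auto; lia.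
  apply Rle_trans with ((Rabs k + 1) * (D / (Rabs k + 1))).
  apply Rmult_le_compat_l; lra. right; field; lra.
Qed.

Lemma rem_transfer rho G C m k j p : (0 < rho)%nat ->
  (forall y, Rabs y <= D -> Rabs (G y) <= C * Rabs y ^ m) -> (p + j <= rho * m)%nat ->
  bigO rho p (fun n => u rho n ^ j * G (k * x n)).
Proof.
  intros Hr HG Hp. exists (Rabs C * Rabs k ^ m).
  eapply ev_mono. apply ev_and. apply (x_small rho k Hr). apply (ev_ge 1).
  intros n [H1 H2]. pose proof (t_pos rho n). pose proof (u_pos rho n).
  rewrite Rabs_mult, (Rabs_right (_ ^ _)) by (left; apply pow_lt; lra).
  apply Rle_trans with (u rho n ^ j * (Rabs C * Rabs (k * x n) ^ m)).
  apply Rmult_le_compat_l. apply pow_le; lra.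
  eapply Rle_trans. apply HG; auto. apply Rmult_le_compat_r. apply pow_le, Rabs_pos. apply Rle_abs.
  rewrite Rabs_mult, <- (t_pow rho n) by auto.
  rewrite (Rabs_right (_ ^ _)) by (left; apply pow_lt; lra).
  rewrite Rpow_mult_distr, <- pow_mult.
  replace (u rho n ^ j * (Rabs C * (Rabs k ^ m * t rho n ^ (rho * m))))
    with (Rabs C * Rabs k ^ m * (u rho n ^ j * t rho n ^ (rho * m))) by ring.
  rewrite ut_pow by lia. apply Rmult_le_compat_l.
  apply Rmult_le_pos. apply Rabs_pos. apply pow_le, Rabs_pos.
  apply tpow_le; auto. lia.
Qed.

Lemma E_transfer rho M F K k j : (0 < rho)%nat -> (j <= rho)%nat -> Xc F K ->
  ((0 < j)%nat -> F 0 = 0) -> (S M + j <= rho * K)%nat ->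
  E rho M (fun n => u rho n ^ j * F (k * x n)).
Proof.
  intros Hr Hj [c [C HF]] HF0 HK.
  assert (HK1 : (1 <= K)%nat) by (destruct K; lia).
  assert (Hc0 : c O = F 0).
  { specialize (HF 0). rewrite Rabs_R0, psum_zero in HF.
    destruct K; [lia|]. simpl in HF. rewrite Rmult_0_l, Rmult_0_r in HF.
    assert (Rabs (F 0 - c O) <= 0) by (apply HF; unfold D; lra).
    pose proof (Rabs_pos (F 0 - c O)).
    assert (Rabs (F 0 - c 0%nat) = 0) by lra. apply Rabs_eq_0 in H1. lra. }
  assert (Hterm : forall i, E rho M (fun n => u rho n ^ j * (c i * (k * x n) ^ i))).
  { intros [|i].
    - destruct j.
      + eapply E_ext; [|apply (E_const rho M (c O))]. exists O; intros; simpl; ring.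
      + eapply E_ext; [|apply (E_zero rho M)]. exists O; intros; simpl.
        rewrite Hc0, HF0 by lia. ring.
    - eapply E_ext; [|apply (E_scal rho M (c (S i) * k ^ (S i)) _ (E_tpow rho M (rho * S i - j) Hr))].
      exists 1%nat. intros n Hn. rewrite <- (t_pow rho n) by auto.
      rewrite Rpow_mult_distr, <- pow_mult, <- (ut_pow rho n j) by nia. ring. }
  assert (Hpoly : forall K', E rho M (fun n => u rho n ^ j * psum c K' (k * x n))).
  { induction K'.
    - eapply E_ext; [|apply (E_zero rho M)]. exists O; intros; simpl; ring.
    - eapply E_ext; [|apply (E_add _ _ _ _ IHK' (Hterm K'))]. exists O; intros; simpl; ring. }
  eapply E_ext; [|apply (E_add _ _ _ _ (Hpoly K) (E_small _ _ _ (small_of_bigO _ _ _ Hr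
      (rem_transfer rho (fun y => F y - psum c K y) C K k j (S M) Hr HF HK))))].
  exists O; intros; simpl; ring.
Qed.


Lemma is_derive_subc (f : R -> R) (y l k : R) : is_derive f y l -> is_derive (fun z => f z - k) y l.
Proof.
  intros H. apply is_derive_Reals. apply is_derive_Reals in H. replace l with (l - 0) by ring.
  apply (derivable_pt_lim_minus f (fun _ => k)); auto. apply derivable_pt_lim_const.
Qed.

Lemma pw0 a : pw a 0 = 1.
Proof. unfold pw. rewrite Rplus_0_r, ln_1, Rmult_0_r, exp_0. auto. Qed.

Lemma pw_one y : Rabs y <= D -> pw 1 y = 1 + y.
Proof. intros Hy. apply D_bounds in Hy. unfold pw. rewrite Rmult_1_l, exp_ln; lra. Qed.

Lemma pw_m1 y : Rabs y <= D -> pw (-1) y = / (1 + y).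
Proof.
  intros Hy. apply D_bounds in Hy. unfold pw.
  replace (-1 * ln (1 + y)) with (- ln (1 + y)) by ring. rewrite exp_Ropp, exp_ln; lra.
Qed.

Lemma pw_zero y : pw 0 y = 1.
Proof. unfold pw. rewrite Rmult_0_l, exp_0. auto. Qed.

Lemma Xc_pwm1 a K : Xc (fun y => pw a y - 1) (S K).
Proof.
  apply Xc_integ with (fun y => a * pw (a - 1) y).
  - intros y Hy. apply is_derive_subc. apply pw_derive; auto.
  - apply Xc_scal, Xc_pw.
Qed.

Lemma bound1 f g : f 0 = 0 ->
  (forall y, Rabs y <= D -> is_derive f y (g y)) -> Xc g 0 ->
  exists C, forall y, Rabs y <= D -> Rabs (f y) <= C * Rabs y ^ 1.
Proof.
  intros H0 Hd [c [C Hb]]. exists C. intros y Hy.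
  pose proof (integ f g c 0 C Hd Hb y Hy). simpl in H. rewrite H0 in H.
  simpl. replace (f y) with (f y - (0 + 0 * 1)) by ring. auto.
Qed.

Lemma pwm1_bound a : exists C, forall y, Rabs y <= D -> Rabs (pw a y - 1) <= C * Rabs y ^ 1.
Proof.
  apply bound1 with (fun y => a * pw (a - 1) y).
  - rewrite pw0; ring.
  - intros y Hy. apply is_derive_subc. apply pw_derive; auto.
  - apply Xc_scal, Xc_pw.
Qed.

Lemma exp_bound : exists C, forall y, Rabs y <= D -> Rabs (exp y - 1) <= C * Rabs y ^ 1.
Proof.
  apply bound1 with exp.
  - rewrite exp_0; ring.
  - intros y Hy. apply is_derive_subc. auto_derive; auto. ring.
  - apply Xc_exp.
Qed.

Lemma ln1_derive y : Rabs y <= D -> is_derive (fun z => ln (1 + z)) y (pw (-1) y).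
Proof.
  intros Hy. rewrite pw_m1 by auto. apply D_bounds in Hy. auto_derive. lra. field. lra.
Qed.

Lemma Xc_ln1 K : Xc (fun y => ln (1 + y)) (S K).
Proof. apply Xc_integ with (pw (-1)). apply ln1_derive. apply Xc_pw. Qed.

Definition psi (y : R) : R := (1 + y) * ln (1 + y) - y.

Lemma psi0 : psi 0 = 0.
Proof. unfold psi. rewrite Rplus_0_r, ln_1. ring. Qed.

Lemma psi_derive y : Rabs y <= D -> is_derive psi y (ln (1 + y)).
Proof.
  intros Hy. apply D_bounds in Hy. unfold psi. auto_derive. lra. field. lra.
Qed.

Lemma Xc_psi K : Xc psi (S (S K)).
Proof. apply Xc_integ with (fun y => ln (1 + y)). apply psi_derive. apply Xc_ln1. Qed.

Lemma psi_bound : exists C, forall y, Rabs y <= D -> Rabs (psi y) <= C * Rabs y ^ 2.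
Proof.
  destruct (bound1 (fun y => ln (1 + y)) (pw (-1))) as [C HC].
  rewrite Rplus_0_r, ln_1; auto. apply ln1_derive. apply Xc_pw.
  exists C. intros y Hy.
  assert (Hb : forall z, Rabs z <= D -> Rabs (ln (1 + z) - psum (fun _ => 0) 1 z) <= C * Rabs z ^ 1).
  { intros z Hz. simpl psum. replace (ln (1 + z) - (0 + 0 * 1)) with (ln (1 + z)) by ring. auto. }
  pose proof (integ psi (fun z => ln (1 + z)) (fun _ => 0) 1 C psi_derive Hb y Hy).
  rewrite psi0 in H. simpl psum in H. unfold icoef in H.
  replace (psi y - (0 + 0 * 1 + 0 / 1 * (y * 1))) with (psi y) in H by field. auto.
Qed.


Lemma E_inv rho M v L : (0 < rho)%nat -> L <> 0 -> E rho M v -> bigO rho 1 (fun n => v n - L) ->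
  E rho M (fun n => / v n) /\ bigO rho 1 (fun n => / v n - / L).
Proof.
  intros Hr HL Hv Bv.
  set (w := fun n => / L * (v n - L)).
  assert (Ew : E rho M w).
  { unfold w. apply E_scal. eapply E_ext; [|apply (E_add _ _ _ _ Hv (E_const rho M (- L)))].
    exists O; intros; ring. }
  assert (Bw : bigO rho 1 w) by (apply bigO_scal; auto).
  destruct (ev_small_w rho w Hr Bw) as [Cw [_ Hev]].
  assert (Heq : ev (fun n => / L * pw (-1) (w n) = / v n)).
  { eapply ev_mono. apply Hev. intros n [_ H]. rewrite pw_m1 by auto.
    apply D_bounds in H. unfold w in *.
    assert (v n <> 0).
    { intro E0. rewrite E0 in H. replace (/ L * (0 - L)) with (-1) in H by (field; auto). lra. }
    field. auto. }
  split.
  - eapply E_ext. apply Heq. apply E_scal. apply E_comp; auto. apply Xc_pw.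
  - destruct (pwm1_bound (-1)) as [C HC].
    eapply bigO_ext; [|apply (bigO_scal rho 1 (/ L) _ (bigO_comp rho (fun y => pw (-1) y - 1) w 1 C Hr HC Bw))].
    eapply ev_mono. apply Heq. intros n E1. simpl. rewrite <- E1. ring.
Qed.

Lemma bigO_prod rho f g L1 L2 : (0 < rho)%nat ->
  bigO rho 1 (fun n => f n - L1) -> bigO rho 1 (fun n => g n - L2) ->
  bigO rho 1 (fun n => f n * g n - L1 * L2).
Proof.
  intros Hr Bf Bg.
  assert (Bg0 : bigO rho 0 g).
  { eapply bigO_ext; [|apply (bigO_add _ _ _ _ (bigO_mono rho 0 1 _ Hr (Nat.le_0_l 1) Bg) (bigO_const rho L2))].
    exists O; intros; simpl; ring. }
  eapply bigO_ext; [|apply (bigO_add _ _ _ _ (bigO_mul _ _ _ _ Bg0 Bf) (bigO_scal _ _ L1 _ Bg))].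
  exists O; intros; simpl; ring.
Qed.

Lemma bigO1_small rho w : (0 < rho)%nat -> bigO rho 1 w -> forall eps, 0 < eps -> ev (fun n => Rabs (w n) <= eps).
Proof.
  intros Hr [C HC] eps He.
  assert (Hp : 0 < Rabs C + 1) by (pose proof (Rabs_pos C); lra).
  eapply ev_mono. apply ev_and. apply HC. apply (t_small rho Hr (eps / (Rabs C + 1))).
  apply Rdiv_lt_0_compat; auto.
  intros n [H1 H2]. simpl in H1. rewrite Rmult_1_r in H1. pose proof (t_pos rho n).
  eapply Rle_trans. apply H1.
  apply Rle_trans with ((Rabs C + 1) * t rho n).
  apply Rmult_le_compat_r; [lra| pose proof (Rle_abs C); lra].
  apply Rle_trans with ((Rabs C + 1) * (eps / (Rabs C + 1))).
  apply Rmult_le_compat_l; lra. right; field; lra.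
Qed.

Lemma ev_nonzero rho v L : (0 < rho)%nat -> L <> 0 -> bigO rho 1 (fun n => v n - L) -> ev (fun n => v n <> 0).
Proof.
  intros Hr HL B. eapply ev_mono. apply (bigO1_small rho _ Hr B (Rabs L / 2)).
  pose proof (Rabs_pos_lt L HL). lra.
  intros n H E0. cbv beta in H. rewrite E0 in H. replace (0 - L) with (- L) in H by ring. rewrite Rabs_Ropp in H.
  pose proof (Rabs_pos_lt L HL). lra.
Qed.

Lemma psum_split d K y : psum d (S K) y = d O + y * psum (fun k => d (S k)) K y.
Proof.
  induction K. simpl. ring.
  change (psum d (S (S K)) y) with (psum d (S K) y + d (S K) * y ^ (S K)).
  rewrite IHK. simpl. ring.
Qed.

Lemma zero_of_small a : (forall eps, 0 < eps -> Rabs a <= eps) -> a = 0.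
Proof.
  intros H. destruct (Req_dec a 0); auto. exfalso.
  pose proof (Rabs_pos_lt a H0). specialize (H (Rabs a / 2)). lra.
Qed.

Lemma const_unique rho M v d L : (0 < rho)%nat ->
  small rho M (fun n => v n - psum d (S M) (t rho n)) -> bigO rho 1 (fun n => v n - L) -> d O = L.
Proof.
  intros Hr Hs B.
  assert (BP : bigO rho 1 (fun n => psum d (S M) (t rho n) - d O)).
  { exists (psum (fun k => Rabs (d (S k))) M 1). eapply ev_mono. apply (ev_ge 1).
    intros n Hn. rewrite psum_split. replace (d O + _ - d O) with (t rho n * psum (fun k => d (S k)) M (t rho n)) by ring.
    pose proof (t_pos rho n). pose proof (t_le1 rho n Hr Hn).
    rewrite Rabs_mult, Rabs_right by lra. rewrite pow_1, Rmult_comm.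
    apply Rmult_le_compat_r. lra. apply psum_abs. lra. }
  apply Rminus_diag_uniq. apply zero_of_small. intros eps He.
  destruct (ev_and _ _ (ev_and _ _ (Hs (eps/3) ltac:(lra)) (ev_and _ _ (bigO1_small rho _ Hr BP (eps/3) ltac:(lra))
     (bigO1_small rho _ Hr B (eps/3) ltac:(lra)))) (ev_ge 1)) as [N HN].
  destruct (HN (N + 1)%nat ltac:(lia)) as [[H1 [H2 H3]] H4].
  set (n := (N + 1)%nat) in *.
  pose proof (t_pos rho n). pose proof (t_le1 rho n Hr H4).
  assert (t rho n ^ M <= 1) by (apply pow_le1; lra).
  assert (eps / 3 * t rho n ^ M <= eps / 3).
  { rewrite <- (Rmult_1_r (eps/3)) at 2. apply Rmult_le_compat_l; lra. }
  replace (d O - L) with (- (v n - psum d (S M) (t rho n)) - (psum d (S M) (t rho n) - d O) + (v n - L)) by ring.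
  eapply Rle_trans. apply Rabs_triang. eapply Rle_trans. apply Rplus_le_compat_r. apply Rabs_triang.
  rewrite Rabs_Ropp, Rabs_Ropp. lra.
Qed.

Lemma Rpower_shift n k a : (1 <= n)%nat ->
  Rpower (INR (n + k)) a = Rpower (INR n) a * pw a (INR k * x n).
Proof.
  intros Hn. pose proof (INR_pos n Hn). pose proof (pos_INR k).
  unfold Rpower, pw, x. rewrite <- exp_plus. f_equal.
  rewrite plus_INR. replace (INR n + INR k) with (INR n * (1 + INR k * / INR n)) by (field; lra).
  rewrite ln_mult. ring. lra.
  assert (0 <= INR k * / INR n) by (apply Rmult_le_pos; [lra| left; apply Rinv_0_lt_compat; lra]). lra.
Qed.

Lemma ln_shift n k : (1 <= n)%nat -> ln (INR (n + k)) = ln (INR n) + ln (1 + INR k * x n).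
Proof.
  intros Hn. pose proof (INR_pos n Hn). pose proof (pos_INR k). unfold x.
  rewrite plus_INR. replace (INR n + INR k) with (INR n * (1 + INR k * / INR n)) by (field; lra).
  rewrite ln_mult. ring. lra.
  assert (0 <= INR k * / INR n) by (apply Rmult_le_pos; [lra| left; apply Rinv_0_lt_compat; lra]). lra.
Qed.

Lemma sum_lin3 (f g h : nat -> R) a b :
  sum_n_m (fun i => f i + g i - 2 * h i) a b = sum_n_m f a b + sum_n_m g a b - 2 * sum_n_m h a b.
Proof.
  transitivity (sum_n_m (fun i => plus (plus (f i) (g i)) (mult (-2) (h i))) a b).
  apply sum_n_m_ext; intros; unfold plus, mult; simpl; ring.
  rewrite sum_n_m_plus, sum_n_m_plus, (sum_n_m_mult_l (K:=R_Ring)). change (plus (plus (sum_n_m f a b) (sum_n_m g a b)) (mult (-2) (sum_n_m h a b)) = sum_n_m f a b + sum_n_m g a b - 2 * sum_n_m h a b) with ((sum_n_m f a b + sum_n_m g a b) + (-2) * (sum_n_m h a b) = sum_n_m f a b + sum_n_m g a b - 2 * sum_n_m h a b). ring.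
Qed.


Definition Sk rho M (b : nat -> R) (k n : nat) : R :=
  sum_n_m (fun s => t rho n ^ s * (b s * pw (- (INR s / INR rho)) (INR k * x n))) 0 M.

Definition Wf rho (mu : nat -> R) (n : nat) : R :=
  mu 0%nat * (u rho n ^ rho * psi (INR 2 * x n) + -2 * (u rho n ^ rho * psi (INR 1 * x n)))
  + sum_n_m (fun j => mu j * (u rho n ^ j * (pw (INR j / INR rho) (INR 2 * x n) - 1)
        + -2 * (u rho n ^ j * (pw (INR j / INR rho) (INR 1 * x n) - 1)))) 1 rho.

Lemma Rmult_lc (p q r : R) : p * (q * r) = q * (p * r).
Proof. ring. Qed.

Lemma S_eq rho M b k n : (0 < rho)%nat -> (1 <= n)%nat ->
  sum_n_m (fun s => b s * Rpower (INR (n + k)) (- (INR s / INR rho))) 0 M = Sk rho M b k n.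
Proof.
  intros Hr Hn. unfold Sk. apply sum_n_m_ext. intros s.
  rewrite Rpower_shift, Rpower_nfrac by auto. apply Rmult_lc.
Qed.

Lemma S_eq0 rho M b n : (0 < rho)%nat -> (1 <= n)%nat ->
  sum_n_m (fun s => b s * Rpower (INR n) (- (INR s / INR rho))) 0 M = Sk rho M b 0 n.
Proof.
  intros Hr Hn. rewrite <- S_eq by auto. rewrite Nat.add_0_r. auto.
Qed.

Lemma W_eq rho mu n : (0 < rho)%nat -> (1 <= n)%nat ->
  Qexp rho mu n + Qexp rho mu (n + 2) - 2 * Qexp rho mu (n + 1) = Wf rho mu n.
Proof.
  intros Hr Hn. unfold Qexp, Wf.
  rewrite (sum_n_m_ext (fun j => mu j * Rpower (INR (n + 2)) (INR j / INR rho))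
     (fun j => mu j * (u rho n ^ j * pw (INR j / INR rho) (INR 2 * x n)))).
  2:{ intros j. rewrite Rpower_shift, Rpower_frac by auto. auto. }
  rewrite (sum_n_m_ext (fun j => mu j * Rpower (INR (n + 1)) (INR j / INR rho))
     (fun j => mu j * (u rho n ^ j * pw (INR j / INR rho) (INR 1 * x n)))).
  2:{ intros j. rewrite Rpower_shift, Rpower_frac by auto. auto. }
  rewrite (sum_n_m_ext (fun j => mu j * Rpower (INR n) (INR j / INR rho))
     (fun j => mu j * u rho n ^ j)).
  2:{ intros j. rewrite Rpower_frac by auto. auto. }
  rewrite (sum_n_m_ext (fun j => mu j * (u rho n ^ j * (pw (INR j / INR rho) (INR 2 * x n) - 1)
        + -2 * (u rho n ^ j * (pw (INR j / INR rho) (INR 1 * x n) - 1))))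
     (fun j => mu j * u rho n ^ j + mu j * (u rho n ^ j * pw (INR j / INR rho) (INR 2 * x n))
        - 2 * (mu j * (u rho n ^ j * pw (INR j / INR rho) (INR 1 * x n))))).
  2:{ intros j. match goal with |- ?a = ?b => change (@eq R a b) end; ring. }
  rewrite sum_lin3.
  rewrite (ln_shift n 2), (ln_shift n 1) by auto. rewrite u_pow by auto.
  unfold psi, x. rewrite !plus_INR. pose proof (INR_pos n Hn).
  replace (INR (n + 2)) with (INR n + INR 2) by (rewrite plus_INR; auto).
  replace (INR 2) with 2 by (simpl; ring). replace (INR 1) with 1 by (simpl; ring). match goal with |- ?a = ?b => change (@eq R a b) end. field. lra.
Qed.


Lemma pwk_E rho M a k : (0 < rho)%nat -> E rho M (fun n => pw a (k * x n)).
Proof.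
  intros Hr.
  eapply E_ext; [|apply (E_transfer rho M (pw a) (S M) k 0 Hr (Nat.le_0_l _) (Xc_pw _ _) (fun H => ltac:(lia)))].
  exists O; intros; simpl; ring. nia.
Qed.

Lemma pwk_B rho a k : (0 < rho)%nat -> bigO rho 1 (fun n => pw a (k * x n) - 1).
Proof.
  intros Hr. destruct (pwm1_bound a) as [C HC].
  eapply bigO_ext; [|apply (rem_transfer rho (fun y => pw a y - 1) C 1 k 0 1 Hr HC)].
  exists O; intros; simpl; ring. lia.
Qed.

Lemma Sk_E rho M b k : (0 < rho)%nat -> E rho M (fun n => Sk rho M b k n).
Proof.
  intros Hr. unfold Sk.
  apply (E_sum rho M (fun s n => t rho n ^ s * (b s * pw (- (INR s / INR rho)) (INR k * x n)))).
  intros s _. apply E_mul; auto. apply E_tpow; auto. apply E_scal. apply pwk_E; auto.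
Qed.

Lemma aux_eq1 (z a : R) : z = 1 * (a * 1) + z - a.
Proof. ring. Qed.

Lemma Sk_B rho M b k : (0 < rho)%nat -> bigO rho 1 (fun n => Sk rho M b k n - b O).
Proof.
  intros Hr. unfold Sk.
  eapply bigO_ext; [|apply (bigO_sum rho 1 (fun s n => t rho n ^ s * (b s * pw (- (INR s / INR rho)) (INR k * x n))) 1 M)].
  - exists O. intros n _. rewrite (sum_Sn_m _ 0 M) by lia.
    replace (pw (- (INR 0 / INR rho)) (INR k * x n)) with 1.
    2:{ unfold pw. simpl INR. replace (- (0 / INR rho) * ln (1 + INR k * x n)) with 0 by (unfold Rdiv; ring).
        rewrite exp_0; auto. }
    change (plus ?a ?b) with (a + b). simpl. apply aux_eq1.
  - intros s Hs.
    assert (Bb : bigO rho 0 (fun n => b s * pw (- (INR s / INR rho)) (INR k * x n))).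
    { apply E_bounded with M; auto. apply E_scal. apply pwk_E; auto. }
    assert (Bt : bigO rho 1 (fun n => t rho n ^ s)).
    { exists 1. eapply ev_mono. apply (ev_ge 1). intros n Hn.
      rewrite Rabs_right by (left; apply pow_lt, t_pos). rewrite Rmult_1_l. apply tpow_le; auto; lia. }
    eapply bigO_ext; [|apply (bigO_mul _ _ _ _ Bb Bt)]. exists O; intros; simpl; ring.
Qed.

Lemma e_small rho M e : (0 < rho)%nat ->
  is_lim_seq (fun n => Rpower (INR n) (INR M / INR rho) * e n) 0 ->
  forall k, small rho M (fun n => e (n + k)%nat).
Proof.
  intros Hr Hl k eps He. apply is_lim_seq_spec in Hl.
  destruct (Hl (mkposreal eps He)) as [N HN]. simpl in HN.
  exists (S N). intros n Hn.
  specialize (HN (n + k)%nat ltac:(lia)). rewrite Rminus_0_r in HN.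
  rewrite Rpower_frac in HN by lia.
  pose proof (u_pos rho (n + k)). pose proof (t_pos rho (n + k)).
  replace (e (n + k)%nat) with (t rho (n + k) ^ M * (u rho (n + k) ^ M * e (n + k)%nat)).
  2:{ rewrite <- Rmult_assoc, <- Rpow_mult_distr, (Rmult_comm (t _ _) (u _ _)), ut, pow1. ring. }
  rewrite Rabs_mult, Rabs_right by (left; apply pow_lt; auto).
  rewrite Rmult_comm. apply Rmult_le_compat. apply Rabs_pos. apply pow_le; lra. lra.
  apply pow_incr. split. lra. apply t_mono; lia.
Qed.

Lemma W_E rho M mu : (0 < rho)%nat -> E rho M (fun n => Wf rho mu n).
Proof.
  intros Hr. unfold Wf. apply E_add.
  - apply E_scal. apply E_add.
    + apply (E_transfer rho M psi (S (S (M + rho))) (INR 2) rho Hr (le_n _) (Xc_psi _) (fun _ => psi0)). nia.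
    + apply E_scal. apply (E_transfer rho M psi (S (S (M + rho))) (INR 1) rho Hr (le_n _) (Xc_psi _) (fun _ => psi0)). nia.
  - apply (E_sum rho M (fun j n => mu j * (u rho n ^ j * (pw (INR j / INR rho) (INR 2 * x n) - 1)
        + -2 * (u rho n ^ j * (pw (INR j / INR rho) (INR 1 * x n) - 1))))).
    intros j Hj. apply E_scal. apply E_add; [|apply E_scal].
    + apply (E_transfer rho M (fun y => pw (INR j / INR rho) y - 1) (S (M + rho)) (INR 2) j Hr ltac:(lia) (Xc_pwm1 _ _)).
      intros _. rewrite pw0; ring. nia.
    + apply (E_transfer rho M (fun y => pw (INR j / INR rho) y - 1) (S (M + rho)) (INR 1) j Hr ltac:(lia) (Xc_pwm1 _ _)).
      intros _. rewrite pw0; ring. nia.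
Qed.

Lemma W_B rho mu : (0 < rho)%nat -> bigO rho 1 (fun n => Wf rho mu n).
Proof.
  intros Hr. unfold Wf. destruct psi_bound as [Cp Hp]. apply bigO_add.
  - apply bigO_scal. apply bigO_add.
    + apply (rem_transfer rho psi Cp 2 (INR 2) rho 1 Hr Hp). lia.
    + apply bigO_scal. apply (rem_transfer rho psi Cp 2 (INR 1) rho 1 Hr Hp). lia.
  - apply (bigO_sum rho 1 (fun j n => mu j * (u rho n ^ j * (pw (INR j / INR rho) (INR 2 * x n) - 1)
        + -2 * (u rho n ^ j * (pw (INR j / INR rho) (INR 1 * x n) - 1))))).
    intros j Hj. apply bigO_scal.
    destruct (Nat.eq_dec j rho) as [->|Hne].
    + apply bigO_ext with (fun _ => 0); [|exists 0; exists O; intros; rewrite Rabs_R0; lra].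
      eapply ev_mono. apply ev_and. apply (x_small rho (INR 2) Hr). apply (x_small rho (INR 1) Hr).
      intros n [H1 H2]. replace (INR rho / INR rho) with 1 by (field; apply not_0_INR; lia).
      rewrite !pw_one by auto. simpl INR. ring.
    + destruct (pwm1_bound (INR j / INR rho)) as [C HC].
      apply bigO_add; [|apply bigO_scal].
      * apply (rem_transfer rho (fun y => pw (INR j / INR rho) y - 1) C 1 (INR 2) j 1 Hr HC). lia.
      * apply (rem_transfer rho (fun y => pw (INR j / INR rho) y - 1) C 1 (INR 1) j 1 Hr HC). lia.
Qed.


Lemma psum_sum d K y : psum d (S K) y = d O + sum_n_m (fun i => d i * y ^ i) 1 K.
Proof.
  induction K.
  - rewrite sum_n_m_zero by lia. simpl. change (zero : R) with 0. ring.
  - change (psum d (S (S K)) y) with (psum d (S K) y + d (S K) * y ^ (S K)).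
    rewrite IHK, sum_n_Sm by lia. change (plus ?a ?b) with (a + b). ring.
Qed.

Lemma exp_combo a b c : exp (a + b - 2 * c) = exp a * exp b / exp c ^ 2.
Proof.
  replace (a + b - 2 * c) with (a + b + - (c + c)) by ring.
  rewrite !exp_plus, exp_Ropp, exp_plus. pose proof (exp_pos c). field. lra.
Qed.

Definition Vk rho M b (e : nat -> R) k n := Sk rho M b k n + e (n + k)%nat.

Theorem mainTheorem3
  (a : nat -> R) (rho M : nat) (mu : nat -> R) (r : R) (b : nat -> R)
  (Hrho : (0 < rho)%nat) (HM : (0 < M)%nat)
  (Hrec : P_recursive a)
  (Hb0 : b 0%nat <> 0)
  (Hasym : exists e : nat -> R,
      is_lim_seq (fun n => Rpower (INR n) (INR M / INR rho) * e n) 0 /\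
      forall n : nat, (1 <= n)%nat ->
        a n = exp (Qexp rho mu n) * Rpower (INR n) r *
              (sum_n_m (fun s => b s * Rpower (INR n) (- (INR s / INR rho))) 0 M
               + e n)) :
  exists c : nat -> R,
    is_lim_seq
      (fun n => Rpower (INR n) (INR M / INR rho) *
         (a n * a (n + 2)%nat / (a (n + 1)%nat) ^ 2 - 1
          - sum_n_m (fun i => c i / Rpower (INR n) (INR i / INR rho)) 1 M))
      0.
Proof.
  destruct Hasym as [e [He Ha]].
  assert (EV : forall k, E rho M (Vk rho M b e k)).
  { intros k. apply E_add. apply Sk_E; auto. apply E_small. apply e_small; auto. }
  assert (BV : forall k, bigO rho 1 (fun n => Vk rho M b e k n - b O)).
  { intros k. eapply bigO_ext; [|apply (bigO_add _ _ _ _ (Sk_B rho M b k Hrho)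
      (bigO_mono rho 1 M _ Hrho HM (bigO_of_small _ _ _ (e_small rho M e Hrho He k))))].
    exists O; intros; unfold Vk; ring. }
  assert (EA : E rho M (fun n => exp (Wf rho mu n))).
  { apply E_comp; auto. apply Xc_exp. apply W_E; auto. apply W_B; auto. }
  assert (BA : bigO rho 1 (fun n => exp (Wf rho mu n) - 1)).
  { destruct exp_bound as [C HC]. apply (bigO_comp rho (fun y => exp y - 1) _ 1 C Hrho HC). apply W_B; auto. }
  assert (Hp1 : E rho M (fun n => pw r (INR 1 * x n) * pw r (INR 1 * x n)) /\
                bigO rho 1 (fun n => pw r (INR 1 * x n) * pw r (INR 1 * x n) - 1)).
  { split. apply E_mul; auto; apply pwk_E; auto.
    eapply bigO_ext; [|apply (bigO_prod _ _ _ _ _ Hrho (pwk_B rho r (INR 1) Hrho) (pwk_B rho r (INR 1) Hrho))].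
    exists O; intros; ring. }
  destruct Hp1 as [Ep1 Bp1].
  destruct (E_inv rho M _ 1 Hrho ltac:(lra) Ep1 Bp1) as [Ei1 Bi1].
  set (B := fun n => pw r (INR 2 * x n) * / (pw r (INR 1 * x n) * pw r (INR 1 * x n))).
  assert (EB : E rho M B).
  { apply E_mul; auto. apply pwk_E; auto. }
  assert (BB : bigO rho 1 (fun n => B n - 1 * / 1)).
  { apply bigO_prod; auto. apply pwk_B; auto. }
  assert (Hb2 : b O * b O <> 0) by (apply Rmult_integral_contrapositive; auto).
  assert (EV11 : E rho M (fun n => Vk rho M b e 1 n * Vk rho M b e 1 n)) by (apply E_mul; auto).
  assert (BV11 : bigO rho 1 (fun n => Vk rho M b e 1 n * Vk rho M b e 1 n - b O * b O)) by (apply bigO_prod; auto).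
  destruct (E_inv rho M _ _ Hrho Hb2 EV11 BV11) as [EiV BiV].
  set (C := fun n => Vk rho M b e 0 n * Vk rho M b e 2 n * / (Vk rho M b e 1 n * Vk rho M b e 1 n)).
  assert (EC : E rho M C).
  { apply E_mul; auto. apply E_mul; auto. }
  assert (BC : bigO rho 1 (fun n => C n - b O * b O * / (b O * b O))).
  { apply bigO_prod; auto. apply bigO_prod; auto. }
  set (Rt := fun n => a n * a (n + 2)%nat / (a (n + 1)%nat) ^ 2).
  assert (Heq : ev (fun n => Rt n = exp (Wf rho mu n) * B n * C n)).
  { eapply ev_mono. apply ev_and. apply (ev_nonzero rho _ _ Hrho Hb0 (BV 1%nat)). apply (ev_ge 1).
    intros n [HV1 Hn]. unfold Rt, B, C, Vk in *.
    rewrite (Ha n), (Ha (n + 2)%nat), (Ha (n + 1)%nat) by lia.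
    rewrite S_eq0, !S_eq by auto. rewrite <- W_eq by auto. rewrite exp_combo.
    rewrite (Rpower_shift n 2), (Rpower_shift n 1) by auto. rewrite Nat.add_0_r.
    pose proof (exp_pos (Qexp rho mu (n + 1))).
    assert (Rpower (INR n) r > 0) by (unfold Rpower; apply exp_pos).
    assert (pw r (INR 1 * x n) > 0) by (unfold pw; apply exp_pos).
    field. repeat split; lra || auto. }
  assert (ER : E rho M Rt).
  { eapply E_ext. eapply ev_mono. apply Heq. intros n H; symmetry; exact H.
    apply E_mul; auto. apply E_mul; auto. }
  assert (BR : bigO rho 1 (fun n => Rt n - 1)).
  { eapply bigO_ext; [|apply (bigO_prod _ _ _ _ _ Hrho (bigO_prod _ _ _ _ _ Hrho BA BB) BC)].
    eapply ev_mono. apply Heq. intros n H. cbv beta. rewrite H. field. auto. }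
  destruct ER as [d Hd].
  pose proof (const_unique rho M Rt d 1 Hrho Hd BR) as Hd0.
  exists d. apply is_lim_seq_spec. intros eps.
  destruct (Hd (eps / 2) ltac:(destruct eps; simpl; lra)) as [N HN].
  exists (max N 1). intros n Hn. rewrite Rminus_0_r.
  specialize (HN n ltac:(lia)). cbv beta in HN.
  rewrite psum_sum, Hd0 in HN.
  rewrite (sum_n_m_ext_loc (fun i => d i / Rpower (INR n) (INR i / INR rho)) (fun i => d i * t rho n ^ i)).
  2:{ intros i _. rewrite Rpower_frac by lia. unfold t. rewrite pow_inv. reflexivity. }
  rewrite Rpower_frac by lia. fold (Rt n).
  replace (Rt n - 1 - sum_n_m (fun i => d i * t rho n ^ i) 1 M)
    with (Rt n - (1 + sum_n_m (fun i => d i * t rho n ^ i) 1 M)) by ring.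
  rewrite Rabs_mult, (Rabs_right (_ ^ _)) by (left; apply pow_lt, u_pos).
  apply Rle_lt_trans with (u rho n ^ M * (eps / 2 * t rho n ^ M)).
  apply Rmult_le_compat_l. apply pow_le. left; apply u_pos. auto.
  replace (u rho n ^ M * (eps / 2 * t rho n ^ M)) with (eps / 2 * (u rho n * t rho n) ^ M)
    by (rewrite Rpow_mult_distr; ring).
  rewrite ut, pow1. destruct eps; simpl; lra.
Qed.
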